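(* Let $X$ be a Tychonoff space. The following are equivalent: (1) $C_\gamma(X)$ is $\aleph_0$-bounded; (2) $C_m(X)$ is $\aleph_0$-bounded; (3) $C_u(X)$ is $\aleph_0$-bounded; (4) $C_u(X)$ is separable; (5) $X$ is compact and metrizable; (6) $C_\gamma(X)$ is second countable; (7) $C_\gamma(X)$ has a countable network; (8) $C_\gamma(X)$ is separable; (9) $C_\gamma(X)$ is ccc; (10) $C_m(X)$ is separable; (11) $C_m(X)$ is Lindelöf; (12) $C_m(X)$ is ccc.
   Context: $C(X)$ is the set of continuous real-valued functions on a Tychonoff space $X$, a topological group under pointwise addition with identity the zero function. $C_u(X)$: topology of uniform convergence, basic neighborhoods of $f$ are $\{g:|g(x)-f(x)|<\varepsilon\ \forall x\in X\}$, $\varepsilon>0$. $C_m(X)$: $m$-topology, basic neighborhoods $\{g:|g(x)-f(x)|<\varepsilon(x)\ \forall x\in X\}$ with $\varepsilon\in C(X)$ strictly positive. $C_\gamma(X)$: graph topology, basic neighborhoods $\{g:|g(x)-f(x)|<\eta(x)\ \forall x\in X\}$ with $\eta$ a strictly positive lower semicontinuous real-valued function on $X$. A topological group $G$ with identity $e$ is $\aleph_0$-bounded if for each neighborhood $U$ of $e$ there is a countable $A\subset G$ with $G=A\cdot U$. ccc means every family of pairwise disjoint nonempty open sets is countable. *)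

(* Defs.v *)
From Stdlib Require Import Reals List Classical.
Open Scope R_scope.

Definition Subset {T : Type} (A B : T -> Prop) : Prop := forall x, A x -> B x.

Definition is_topology {T : Type} (op : (T -> Prop) -> Prop) : Prop :=
  op (fun _ => True) /\
  (forall U V, op U -> op V -> op (fun x => U x /\ V x)) /\
  (forall F : (T -> Prop) -> Prop, (forall U, F U -> op U) ->
     op (fun x => exists U, F U /\ U x)).

Definition closed {T : Type} (op : (T -> Prop) -> Prop) (A : T -> Prop) : Prop :=
  op (fun x => ~ A x).

Definition R_open (U : R -> Prop) : Prop :=
  forall x, U x -> exists eps, 0 < eps /\ forall y, Rabs (y - x) < eps -> U y.

Definition continuous {T : Type} (op : (T -> Prop) -> Prop) (f : T -> R) : Prop :=
  forall U, R_open U -> op (fun x => U (f x)).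

Definition lsc {T : Type} (op : (T -> Prop) -> Prop) (f : T -> R) : Prop :=
  forall r, op (fun x => r < f x).

Definition T1 {T : Type} (op : (T -> Prop) -> Prop) : Prop :=
  forall x, closed op (fun y => y = x).

Definition completely_regular {T : Type} (op : (T -> Prop) -> Prop) : Prop :=
  forall (A : T -> Prop) x, closed op A -> ~ A x ->
    exists f, continuous op f /\ f x = 0 /\ forall y, A y -> f y = 1.

Definition tychonoff {T : Type} (op : (T -> Prop) -> Prop) : Prop :=
  is_topology op /\ T1 op /\ completely_regular op.

Definition countable {T : Type} (S : T -> Prop) : Prop :=
  exists f : T -> nat, forall a b, S a -> S b -> f a = f b -> a = b.

Definition compact_space {T : Type} (op : (T -> Prop) -> Prop) : Prop :=
  forall F : (T -> Prop) -> Prop, (forall U, F U -> op U) ->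
    (forall x, exists U, F U /\ U x) ->
    exists l : list (T -> Prop), (forall U, In U l -> F U) /\
      (forall x, exists U, In U l /\ U x).

Definition metrizable {T : Type} (op : (T -> Prop) -> Prop) : Prop :=
  exists d : T -> T -> R,
    (forall x y, 0 <= d x y) /\ (forall x y, d x y = 0 <-> x = y) /\
    (forall x y, d x y = d y x) /\ (forall x y z, d x z <= d x y + d y z) /\
    (forall U, op U <-> (forall x, U x -> exists eps, 0 < eps /\
                           forall y, d x y < eps -> U y)).

Definition separable {T : Type} (op : (T -> Prop) -> Prop) : Prop :=
  exists D : T -> Prop, countable D /\
    forall U, op U -> (exists x, U x) -> exists x, U x /\ D x.

Definition second_countable {T : Type} (op : (T -> Prop) -> Prop) : Prop :=
  exists B : (T -> Prop) -> Prop, countable B /\ (forall V, B V -> op V) /\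
    forall U x, op U -> U x -> exists V, B V /\ V x /\ Subset V U.

Definition countable_network {T : Type} (op : (T -> Prop) -> Prop) : Prop :=
  exists N : (T -> Prop) -> Prop, countable N /\
    forall U x, op U -> U x -> exists V, N V /\ V x /\ Subset V U.

Definition ccc {T : Type} (op : (T -> Prop) -> Prop) : Prop :=
  forall F : (T -> Prop) -> Prop,
    (forall U, F U -> op U /\ exists x, U x) ->
    (forall U V, F U -> F V -> U <> V -> forall x, ~ (U x /\ V x)) ->
    countable F.

Definition lindelof {T : Type} (op : (T -> Prop) -> Prop) : Prop :=
  forall F : (T -> Prop) -> Prop, (forall U, F U -> op U) ->
    (forall x, exists U, F U /\ U x) ->
    exists G, countable G /\ Subset G F /\ (forall x, exists U, G U /\ U x).

Definition CX {X : Type} (op : (X -> Prop) -> Prop) : Type :=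
  { f : X -> R | continuous op f }.

Definition Cu_open {X : Type} (op : (X -> Prop) -> Prop) (W : CX op -> Prop) : Prop :=
  forall f, W f -> exists eps, 0 < eps /\
    forall g : CX op, (forall x, Rabs (proj1_sig g x - proj1_sig f x) < eps) -> W g.

Definition Cm_open {X : Type} (op : (X -> Prop) -> Prop) (W : CX op -> Prop) : Prop :=
  forall f, W f -> exists eps : X -> R, continuous op eps /\ (forall x, 0 < eps x) /\
    forall g : CX op, (forall x, Rabs (proj1_sig g x - proj1_sig f x) < eps x) -> W g.

Definition Cgamma_open {X : Type} (op : (X -> Prop) -> Prop) (W : CX op -> Prop) : Prop :=
  forall f, W f -> exists eta : X -> R, lsc op eta /\ (forall x, 0 < eta x) /\
    forall g : CX op, (forall x, Rabs (proj1_sig g x - proj1_sig f x) < eta x) -> W g.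

Definition aleph0_bounded_C {X : Type} (op : (X -> Prop) -> Prop)
    (opC : (CX op -> Prop) -> Prop) : Prop :=
  forall U : CX op -> Prop,
    (exists V, opC V /\ Subset V U /\
       forall z : CX op, (forall x, proj1_sig z x = 0) -> V z) ->
    exists A : CX op -> Prop, countable A /\
      forall h : CX op, exists a u, A a /\ U u /\
        forall x, proj1_sig h x = proj1_sig a x + proj1_sig u x.

(* Main.v *)
Require Import Defs.
From Stdlib Require Import Reals List Classical.
From Stdlib Require Import Lra Lia ZArith ClassicalEpsilon FunctionalExtensionality PropExtensionality ProofIrrelevance Cantor.
From mathcomp Require classical_sets.
Open Scope R_scope.

Lemma pred_ext {T : Type} (P Q : T -> Prop) : (forall x, P x <-> Q x) -> P = Q.
Proof. intros H; apply functional_extensionality; intros x; apply propositional_extensionality; auto. Qed.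

Lemma countable_range {T : Type} (S : T -> Prop) (g : nat -> T) :
  (forall a, S a -> exists n, g n = a) -> countable S.
Proof.
  intros H. exists (fun a => epsilon (inhabits 0%nat) (fun n => g n = a)).
  intros a b Sa Sb E.
  pose proof (epsilon_spec (inhabits 0%nat) (fun n => g n = a) (H a Sa)) as Ea.
  pose proof (epsilon_spec (inhabits 0%nat) (fun n => g n = b) (H b Sb)) as Eb.
  simpl in *. rewrite E in Ea. congruence.
Qed.

Lemma countable_enum {T : Type} (S : T -> Prop) (a0 : T) : S a0 -> countable S ->
  exists g : nat -> T, (forall n, S (g n)) /\ forall a, S a -> exists n, g n = a.
Proof.
  intros Sa0 [f Hf].
  set (P := fun n a => S a /\ (f a = n \/ ~ (exists b, S b /\ f b = n))).
  assert (Ex : forall n, exists a, P n a).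
  { intros n. destruct (classic (exists b, S b /\ f b = n)) as [[b [Sb Eb]]|NE].
    - exists b. split; auto.
    - exists a0. split; auto. }
  exists (fun n => epsilon (inhabits a0) (P n)). split.
  - intros n. exact (proj1 (epsilon_spec (inhabits a0) (P n) (Ex n))).
  - intros a Sa. exists (f a).
    destruct (epsilon_spec (inhabits a0) (P (f a)) (Ex (f a))) as [S1 [E1|E1]].
    + apply Hf; auto.
    + exfalso. apply E1. exists a. auto.
Qed.

Lemma cantor_diag : ~ exists f : (nat -> bool) -> nat, forall s t, f s = f t -> s = t.
Proof.
  intros [f Hf].
  set (g := fun n => epsilon (inhabits (fun _ : nat => true)) (fun s => f s = n)).
  assert (Hg : forall s, g (f s) = s).
  { intros s. apply Hf. unfold g.
    exact (epsilon_spec (inhabits (fun _ : nat => true)) (fun s0 => f s0 = f s) (ex_intro _ s eq_refl)). }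
  set (d := fun n => negb (g n n)).
  pose proof (Hg d) as E.
  assert (E2 : d (f d) = g (f d) (f d)) by (rewrite E; reflexivity).
  unfold d in E2 at 1. destruct (g (f d) (f d)); discriminate.
Qed.

Lemma not_countable_cantor {T : Type} (S : T -> Prop) (Phi : (nat -> bool) -> T) :
  (forall s, S (Phi s)) -> (forall s t, Phi s = Phi t -> s = t) -> ~ countable S.
Proof.
  intros HS Hi [f Hf]. apply cantor_diag. exists (fun s => f (Phi s)).
  intros s t E. apply Hi. apply Hf; auto.
Qed.

Fixpoint dec_aux (k : nat) (m : nat) : list nat :=
  match k with
  | O => nil
  | S k' => fst (of_nat m) :: dec_aux k' (snd (of_nat m))
  end.

Definition dec_list (n : nat) : list nat := dec_aux (fst (of_nat n)) (snd (of_nat n)).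

Lemma dec_aux_surj (l : list nat) : exists m, dec_aux (length l) m = l.
Proof.
  induction l as [|a l [m Hm]]; simpl.
  - exists 0%nat. reflexivity.
  - exists (to_nat (a, m)). rewrite cancel_of_to. simpl. rewrite Hm. reflexivity.
Qed.

Lemma dec_list_surj (l : list nat) : exists n, dec_list n = l.
Proof.
  destruct (dec_aux_surj l) as [m Hm]. exists (to_nat (length l, m)).
  unfold dec_list. rewrite cancel_of_to. simpl. exact Hm.
Qed.

Lemma pair_surj (a b : nat) : exists n, of_nat n = (a, b).
Proof. exists (to_nat (a, b)). apply cancel_of_to. Qed.

Section Top.
Context {X : Type} (op : (X -> Prop) -> Prop) (Ht : is_topology op).

Lemma open_local (P : X -> Prop) :
  (forall x, P x -> exists W, op W /\ W x /\ forall y, W y -> P y) -> op P.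
Proof.
  intros H. destruct Ht as [_ [_ HU]].
  set (F := fun W => op W /\ forall y, W y -> P y).
  assert (E : P = (fun x => exists U, F U /\ U x)).
  { apply pred_ext. intros x. split.
    - intros Px. destruct (H x Px) as [W [oW [Wx HW]]]. exists W. split; [split|]; auto.
    - intros [U [[_ HU'] Ux]]. auto. }
  rewrite E. apply HU. intros U [oU _]; auto.
Qed.

Lemma open_inter (U V : X -> Prop) : op U -> op V -> op (fun x => U x /\ V x).
Proof. destruct Ht as [_ [H _]]; auto. Qed.

Lemma open_full : op (fun _ => True).
Proof. destruct Ht as [H _]; auto. Qed.

Lemma cont_local (f : X -> R) :
  (forall x eps, 0 < eps -> exists W, op W /\ W x /\ forall y, W y -> Rabs (f y - f x) < eps) ->
  continuous op f.
Proof.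
  intros H U oU. apply open_local. intros x Ux.
  destruct (oU (f x) Ux) as [e [He HUe]].
  destruct (H x e He) as [W [oW [Wx HW]]]. exists W. split; [|split]; auto.
Qed.

Lemma cont_local_inv (f : X -> R) : continuous op f ->
  forall x eps, 0 < eps -> exists W, op W /\ W x /\ forall y, W y -> Rabs (f y - f x) < eps.
Proof.
  intros Hf x eps He. exists (fun y => Rabs (f y - f x) < eps). split; [|split].
  - apply (Hf (fun r => Rabs (r - f x) < eps)).
    intros r Hr. exists (eps - Rabs (r - f x)). split; [lra|].
    intros y Hy. pose proof (Rabs_triang (y - r) (r - f x)).
    replace (y - r + (r - f x)) with (y - f x) in H by ring. lra.
  - unfold Rminus. rewrite Rplus_opp_r, Rabs_R0. auto.
  - auto.
Qed.

Lemma cont_const (c : R) : continuous op (fun _ => c).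
Proof.
  apply cont_local. intros x eps He. exists (fun _ => True). split; [apply open_full|split; auto].
  intros. unfold Rminus. rewrite Rplus_opp_r, Rabs_R0. auto.
Qed.

Lemma cont_lip2 (f g : X -> R) (h : R -> R -> R) :
  continuous op f -> continuous op g ->
  (forall a b c d, Rabs (h a b - h c d) <= Rabs (a - c) + Rabs (b - d)) ->
  continuous op (fun x => h (f x) (g x)).
Proof.
  intros Hf Hg Hh. apply cont_local. intros x eps He.
  destruct (cont_local_inv f Hf x (eps/2)) as [W1 [o1 [w1 H1]]]; [lra|].
  destruct (cont_local_inv g Hg x (eps/2)) as [W2 [o2 [w2 H2]]]; [lra|].
  exists (fun y => W1 y /\ W2 y). split; [apply open_inter; auto|split; auto].
  intros y [y1 y2]. specialize (H1 y y1). specialize (H2 y y2).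
  pose proof (Hh (f y) (g y) (f x) (g x)). lra.
Qed.

Lemma cont_plus f g : continuous op f -> continuous op g -> continuous op (fun x => f x + g x).
Proof.
  intros; apply (cont_lip2 f g Rplus); auto. intros a b c d.
  replace (a + b - (c + d)) with ((a - c) + (b - d)) by ring. apply Rabs_triang.
Qed.

Lemma cont_minus f g : continuous op f -> continuous op g -> continuous op (fun x => f x - g x).
Proof.
  intros; apply (cont_lip2 f g Rminus); auto. intros a b c d.
  replace (a - b - (c - d)) with ((a - c) + - (b - d)) by ring.
  rewrite <- (Rabs_Ropp (b - d)). apply Rabs_triang.
Qed.

Lemma Rmin_lip a b c d : Rabs (Rmin a b - Rmin c d) <= Rabs (a - c) + Rabs (b - d).
Proof. unfold Rmin; destruct (Rle_dec a b), (Rle_dec c d); unfold Rabs;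
  repeat destruct Rcase_abs; lra. Qed.

Lemma Rmax_lip a b c d : Rabs (Rmax a b - Rmax c d) <= Rabs (a - c) + Rabs (b - d).
Proof. unfold Rmax; destruct (Rle_dec a b), (Rle_dec c d); unfold Rabs;
  repeat destruct Rcase_abs; lra. Qed.

Lemma cont_min f g : continuous op f -> continuous op g -> continuous op (fun x => Rmin (f x) (g x)).
Proof. intros; apply (cont_lip2 f g Rmin); auto. apply Rmin_lip. Qed.

Lemma cont_max f g : continuous op f -> continuous op g -> continuous op (fun x => Rmax (f x) (g x)).
Proof. intros; apply (cont_lip2 f g Rmax); auto. apply Rmax_lip. Qed.

Lemma cont_abs f : continuous op f -> continuous op (fun x => Rabs (f x)).
Proof.
  intros Hf. apply (cont_lip2 f f (fun a _ => Rabs a)); auto.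
  intros a b c d. pose proof (Rabs_triang_inv a c). pose proof (Rabs_triang_inv c a).
  rewrite (Rabs_minus_sym c a) in H0. pose proof (Rabs_pos (b - d)).
  unfold Rabs at 1; destruct Rcase_abs; lra.
Qed.

Lemma cont_scal (c : R) f : continuous op f -> continuous op (fun x => c * f x).
Proof.
  intros Hf. apply cont_local. intros x eps He.
  destruct (cont_local_inv f Hf x (eps / (Rabs c + 1))) as [W [oW [Wx HW]]].
  { apply Rdiv_lt_0_compat; [lra|]. pose proof (Rabs_pos c); lra. }
  exists W. split; [|split]; auto. intros y Wy.
  replace (c * f y - c * f x) with (c * (f y - f x)) by ring. rewrite Rabs_mult.
  specialize (HW y Wy). pose proof (Rabs_pos c). pose proof (Rabs_pos (f y - f x)).
  apply Rle_lt_trans with ((Rabs c + 1) * Rabs (f y - f x)); [nra|].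
  apply Rmult_lt_reg_l with (/ (Rabs c + 1)). { apply Rinv_0_lt_compat; lra. }
  rewrite <- Rmult_assoc, Rinv_l by lra. unfold Rdiv in HW. lra.
Qed.

Lemma cont_ext f g : continuous op f -> (forall x, f x = g x) -> continuous op g.
Proof.
  intros Hf E. replace g with f; auto. apply functional_extensionality; auto.
Qed.

End Top.

Lemma CX_eq {X : Type} {op : (X -> Prop) -> Prop} (f g : CX op) :
  (forall x, proj1_sig f x = proj1_sig g x) -> f = g.
Proof.
  destruct f as [f Hf], g as [g Hg]; simpl. intros E.
  assert (f = g) by (apply functional_extensionality; auto). subst.
  f_equal. apply proof_irrelevance.
Qed.


Definition Qprop {X : Type} (op : (X -> Prop) -> Prop) : Prop :=
  forall eps, 0 < eps -> exists A : CX op -> Prop, countable A /\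
    forall h : CX op, exists a, A a /\ forall x, Rabs (proj1_sig h x - proj1_sig a x) < eps.

Fixpoint psum (c : nat -> R) (N : nat) : R :=
  match N with O => 0 | S k => psum c k + c k end.

Lemma psum_stable c N : (forall n, (N <= n)%nat -> c n = 0) -> forall M, (N <= M)%nat -> psum c M = psum c N.
Proof.
  intros H M HM. induction HM; auto. simpl. rewrite IHHM, H; [ring|lia].
Qed.

Lemma psum_zero c N : (forall m, (m < N)%nat -> c m = 0) -> psum c N = 0.
Proof. induction N; simpl; auto. intros H. rewrite IHN, H; [ring|lia|intros; apply H; lia]. Qed.

Section LF.
Context {X : Type} (op : (X -> Prop) -> Prop) (Ht : is_topology op).

Definition locfin (phi : nat -> X -> R) : Prop :=
  forall y, exists W N, op W /\ W y /\ forall n z, (N <= n)%nat -> W z -> phi n z = 0.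

Definition lfsum (phi : nat -> X -> R) (x : X) : R :=
  epsilon (inhabits 0) (fun v => exists N, forall M, (N <= M)%nat -> psum (fun n => phi n x) M = v).

Lemma lfsum_eq phi x N : (forall n, (N <= n)%nat -> phi n x = 0) ->
  lfsum phi x = psum (fun n => phi n x) N.
Proof.
  intros H. unfold lfsum.
  assert (Ex : exists v, exists N, forall M, (N <= M)%nat -> psum (fun n => phi n x) M = v).
  { exists (psum (fun n => phi n x) N). exists N. intros M HM. apply psum_stable; auto. }
  destruct (epsilon_spec (inhabits 0) _ Ex) as [N' HN'].
  rewrite <- (HN' (max N N')) by lia. apply psum_stable; auto. lia.
Qed.

Lemma cont_psum phi N : (forall n, continuous op (phi n)) -> continuous op (fun x => psum (fun n => phi n x) N).
Proof.
  intros H. induction N; simpl.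
  - apply cont_const; auto.
  - apply cont_plus; auto.
Qed.

Lemma cont_lfsum phi : (forall n, continuous op (phi n)) -> locfin phi -> continuous op (lfsum phi).
Proof.
  intros Hc Hl. apply cont_local; auto. intros x eps He.
  destruct (Hl x) as [W [N [oW [Wx HW]]]].
  destruct (cont_local_inv op _ (cont_psum phi N Hc) x eps He) as [W' [oW' [Wx' HW']]].
  exists (fun y => W y /\ W' y). split; [apply open_inter; auto|split; auto].
  intros y [Wy Wy']. rewrite (lfsum_eq phi y N), (lfsum_eq phi x N); auto.
Qed.

Lemma fam_notQ (phi : nat -> X -> R) (p : nat -> X) :
  (forall n, continuous op (phi n)) -> locfin phi ->
  (forall n, phi n (p n) = 1) -> (forall n m, n <> m -> phi m (p n) = 0) -> ~ Qprop op.
Proof.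
  intros Hc Hl H1 H0 HQ.
  set (ps := fun (s : nat -> bool) n x => if s n then phi n x else 0).
  assert (Hcs : forall s n, continuous op (ps s n)).
  { intros s n. unfold ps. destruct (s n); auto. apply cont_const; auto. }
  assert (Hls : forall s, locfin (ps s)).
  { intros s y. destruct (Hl y) as [W [N [oW [Wy HW]]]]. exists W, N. split; [|split]; auto.
    intros n z Hn Wz. unfold ps. destruct (s n); auto. }
  set (Phi := fun s => exist (fun f => continuous op f) (lfsum (ps s)) (cont_lfsum _ (Hcs s) (Hls s)) : CX op).
  assert (Hval : forall s n, proj1_sig (Phi s) (p n) = if s n then 1 else 0).
  { intros s n. simpl. rewrite (lfsum_eq _ _ (S n)).
    - simpl. rewrite psum_zero.
      + unfold ps. rewrite H1. destruct (s n); ring.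
      + intros m Hm. unfold ps. destruct (s m); auto. apply H0. lia.
    - intros m Hm. unfold ps. destruct (s m); auto. apply H0. lia. }
  destruct (HQ (1/2)) as [A [HA Hh]]; [lra|].
  set (a := fun s => epsilon (inhabits (Phi s)) (fun a => A a /\ forall x, Rabs (proj1_sig (Phi s) x - proj1_sig a x) < 1/2)).
  assert (Ha : forall s, A (a s) /\ forall x, Rabs (proj1_sig (Phi s) x - proj1_sig (a s) x) < 1/2).
  { intros s. exact (epsilon_spec (inhabits (Phi s)) _ (Hh (Phi s))). }
  apply (not_countable_cantor A a); auto.
  - intros s; apply Ha.
  - intros s t E. apply functional_extensionality. intros n.
    destruct (Ha s) as [_ Hs]. destruct (Ha t) as [_ Ht']. rewrite E in Hs.
    specialize (Hs (p n)). specialize (Ht' (p n)). rewrite Hval in Hs, Ht'.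
    pose proof (Rabs_triang (proj1_sig (Phi s) (p n) - proj1_sig (a t) (p n)) (proj1_sig (a t) (p n) - proj1_sig (Phi t) (p n))) as T.
    rewrite Rabs_minus_sym in Ht'. rewrite !Hval in T.
    replace ((if s n then 1 else 0) - proj1_sig (a t) (p n) + (proj1_sig (a t) (p n) - (if t n then 1 else 0)))
      with ((if s n then 1 else 0) - (if t n then 1 else 0)) in T by ring.
    assert (L1 : Rabs ((if s n then 1 else 0) - (if t n then 1 else 0)) < 1) by lra.
    destruct (s n), (t n); auto; exfalso;
      [rewrite Rabs_right in L1 by lra | rewrite Rabs_left in L1 by lra]; lra.
Qed.

Lemma Q_bounded : Qprop op -> forall f, continuous op f -> exists M, forall x, Rabs (f x) <= M.
Proof.
  intros HQ f Hf. apply NNPP. intros NB.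
  assert (HU : forall M, exists x, Rabs (f x) > M).
  { intros M. apply NNPP. intros NE. apply NB. exists M. intros x.
    apply Rnot_gt_le. intros G. apply NE. exists x; auto. }
  set (g := fun x => Rabs (f x)).
  assert (Hg : continuous op g) by (apply cont_abs; auto).
  destruct (HU 0) as [x0 _].
  set (nx := fun y => epsilon (inhabits x0) (fun z => g z > g y + 2)).
  assert (Hnx : forall y, g (nx y) > g y + 2).
  { intros y. exact (epsilon_spec (inhabits x0) (fun z => g z > g y + 2) (HU (g y + 2))). }
  set (xs := fix xs n := match n with O => x0 | S k => nx (xs k) end).
  set (t := fun n => g (xs n)).
  assert (Ht0 : forall n, t n >= 2 * INR n).
  { induction n.
    - unfold t; simpl. unfold g. pose proof (Rabs_pos (f x0)). lra.
    - rewrite S_INR. unfold t in *; simpl. pose proof (Hnx (xs n)). lra. }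
  assert (Hts : forall n m, (n < m)%nat -> t m >= t n + 2).
  { intros n m Hnm. induction Hnm.
    - unfold t; simpl. pose proof (Hnx (xs n)). lra.
    - unfold t in *; simpl. pose proof (Hnx (xs m)). lra. }
  set (phi := fun n y => Rmax 0 (1 - Rabs (g y - t n))).
  apply (fam_notQ phi xs).
  - intros n. unfold phi. apply cont_max; auto. apply cont_const; auto.
    apply cont_minus; auto. apply cont_const; auto. apply cont_abs; auto.
    apply cont_minus; auto. apply cont_const; auto.
  - intros y. destruct (archimed (g y)) as [Hup _].
    set (N := Z.to_nat (up (g y))).
    assert (HN : INR N >= g y).
    { unfold N. rewrite INR_IZR_INZ. rewrite Z2Nat.id.
      - lra.
      - apply le_IZR. assert (0 <= g y) by (unfold g; apply Rabs_pos). simpl. lra. }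
    exists (fun z => g z < g y + 1), (S (S N)). split; [|split].
    + apply (Hg (fun r => r < g y + 1)). intros r Hr. exists (g y + 1 - r). split; [lra|].
      intros z Hz. unfold Rabs in Hz; destruct Rcase_abs; lra.
    + lra.
    + intros n z Hn Hz. unfold phi. pose proof (Ht0 n).
      assert (INR n >= INR (S (S N))) by (apply Rle_ge, le_INR; lia).
      rewrite !S_INR in H0. pose proof (pos_INR N).
      unfold Rmax; destruct Rle_dec; auto. exfalso.
      unfold Rabs in r; destruct Rcase_abs in r; lra.
  - intros n. unfold phi, t. unfold Rminus at 2. rewrite Rplus_opp_r, Rabs_R0.
    unfold Rmax; destruct Rle_dec; lra.
  - intros n m Hnm. unfold phi. fold (t n).
    assert (Rabs (t n - t m) >= 2).
    { destruct (Nat.lt_gt_cases n m) as [[L|L] _]; auto.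
      - pose proof (Hts n m L). rewrite Rabs_minus_sym. rewrite Rabs_right; lra.
      - pose proof (Hts m n L). rewrite Rabs_right; lra. }
    unfold Rmax; destruct Rle_dec; lra.
  - exact HQ.
Qed.

End LF.


Definition E01 (E : R -> Prop) := fun t => t = 0 \/ (E t /\ 0 <= t <= 1).

Lemma E01_bound E : bound (E01 E).
Proof. exists 1. intros t [->|[_ H]]; lra. Qed.

Lemma E01_ne E : exists t, E01 E t.
Proof. exists 0. left; auto. Qed.

Definition sup01 (E : R -> Prop) : R := proj1_sig (completeness (E01 E) (E01_bound E) (E01_ne E)).

Lemma sup01_lub E : is_lub (E01 E) (sup01 E).
Proof. unfold sup01. destruct completeness; auto. Qed.

Lemma sup01_ub E t : E t -> 0 <= t <= 1 -> t <= sup01 E.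
Proof. intros H1 H2. apply (proj1 (sup01_lub E)). right; auto. Qed.

Lemma sup01_ge0 E : 0 <= sup01 E.
Proof. apply (proj1 (sup01_lub E)). left; auto. Qed.

Lemma sup01_le E B : 0 <= B -> (forall t, E t -> 0 <= t <= 1 -> t <= B) -> sup01 E <= B.
Proof. intros HB H. apply (proj2 (sup01_lub E)). intros t [->|[H1 H2]]; auto. Qed.

Lemma sup01_approx E eta : 0 < eta -> 0 < sup01 E -> exists t, E t /\ 0 <= t <= 1 /\ sup01 E - eta < t.
Proof.
  intros He Hs. apply NNPP. intros NE.
  assert (sup01 E <= Rmax 0 (sup01 E - eta)).
  { apply sup01_le. apply Rmax_l. intros t Et Ht.
    apply Rnot_lt_le. intros L. apply NE. exists t. split; auto. split; auto.
    pose proof (Rmax_r 0 (sup01 E - eta)). lra. }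
  unfold Rmax in H; destruct Rle_dec in H; lra.
Qed.

Lemma pow2_ge n : INR n + 1 <= 2 ^ n.
Proof. induction n; [simpl; lra|]. rewrite S_INR. simpl. pose proof (pos_INR n). lra. Qed.

Lemma small_pow2 r : 0 < r -> exists N, / 2 ^ N < r.
Proof.
  intros Hr. destruct (archimed (/ r)) as [Hup _].
  assert (0 < / r) by (apply Rinv_0_lt_compat; auto).
  exists (Z.to_nat (up (/ r))).
  pose proof (pow2_ge (Z.to_nat (up (/ r)))) as P.
  rewrite INR_IZR_INZ, Z2Nat.id in P.
  2:{ apply le_IZR. simpl. lra. }
  assert (Hp : 0 < 2 ^ Z.to_nat (up (/ r))) by lra.
  apply Rmult_lt_reg_l with (2 ^ Z.to_nat (up (/ r))); auto.
  rewrite Rinv_r by lra.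
  apply Rmult_lt_reg_l with (/ r); auto.
  replace (/ r * (2 ^ Z.to_nat (up (/ r)) * r)) with (2 ^ Z.to_nat (up (/ r))) by (field; lra).
  lra.
Qed.

Lemma inv_close a b eps : 0 < b -> 0 < eps -> Rabs (a - b) < Rmin (b / 2) (eps * b * b / 2) ->
  Rabs (/ a - / b) < eps.
Proof.
  intros Hb He H.
  pose proof (Rmin_l (b/2) (eps*b*b/2)). pose proof (Rmin_r (b/2) (eps*b*b/2)).
  assert (Ha : b / 2 < a) by (unfold Rabs in H; destruct Rcase_abs in H; lra).
  assert (E : / a - / b = (b - a) / (a * b)) by (field; lra).
  rewrite E. unfold Rdiv. rewrite Rabs_mult, Rabs_minus_sym, Rabs_inv, (Rabs_right (a * b)) by nra.
  apply Rmult_lt_reg_r with (a * b); [nra|].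
  rewrite Rmult_assoc, Rinv_l by nra. assert (0 < eps * b * (a - b/2)) by (apply Rmult_lt_0_compat; [apply Rmult_lt_0_compat|]; lra). nra.
Qed.

Section Metric.
Context {X : Type} (op : (X -> Prop) -> Prop) (Ht : is_topology op) (d : X -> X -> R)
  (dpos : forall x y, 0 <= d x y) (deq : forall x y, d x y = 0 <-> x = y)
  (dsym : forall x y, d x y = d y x) (dtri : forall x y z, d x z <= d x y + d y z)
  (dop : forall U, op U <-> (forall x, U x -> exists eps, 0 < eps /\ forall y, d x y < eps -> U y)).

Lemma dxx x : d x x = 0.
Proof. apply deq; auto. Qed.

Lemma ball_open x r : op (fun y => d x y < r).
Proof.
  apply dop. intros y Hy. exists (r - d x y). split; [lra|].
  intros z Hz. pose proof (dtri x y z). lra.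
Qed.

Lemma open_ball U x : op U -> U x -> exists eps, 0 < eps /\ forall y, d x y < eps -> U y.
Proof. intros oU Ux. apply (proj1 (dop U) oU); auto. Qed.

Lemma cont_lipd (f : X -> R) (L : R) : 0 <= L -> (forall x y, Rabs (f x - f y) <= L * d x y) -> continuous op f.
Proof.
  intros HL Hf. apply cont_local; auto. intros x eps He.
  exists (fun y => d x y < eps / (L + 1)). split; [apply ball_open|split].
  - rewrite dxx. apply Rdiv_lt_0_compat; lra.
  - intros y Hy. rewrite Rabs_minus_sym. eapply Rle_lt_trans; [apply Hf|].
    apply Rle_lt_trans with ((L+1) * d x y). { pose proof (dpos x y); nra. }
    apply Rmult_lt_reg_l with (/ (L+1)). { apply Rinv_0_lt_compat; lra. }
    rewrite <- Rmult_assoc, Rinv_l by lra. unfold Rdiv in Hy. lra.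
Qed.

Lemma cont_dist p : continuous op (fun y => d p y).
Proof.
  apply (cont_lipd _ 1); [lra|]. intros x y.
  pose proof (dtri p x y). pose proof (dtri p y x). rewrite (dsym y x) in H0.
  unfold Rabs; destruct Rcase_abs; lra.
Qed.

Lemma metric_compact : Qprop op -> compact_space op.
Proof.
  intros HQ F HF Hcov. apply NNPP. intros NC.
  set (Sx := fun x t => exists U, F U /\ forall y, d x y < t -> U y).
  set (r := fun x => sup01 (Sx x)).
  assert (rpos : forall x, 0 < r x).
  { intros x. destruct (Hcov x) as [U [FU Ux]].
    destruct (open_ball U x (HF U FU) Ux) as [e [He HU]].
    apply Rlt_le_trans with (Rmin e 1). { apply Rmin_glb_lt; lra. }
    apply sup01_ub.
    - exists U. split; auto. intros y Hy. apply HU. pose proof (Rmin_l e 1); lra.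
    - pose proof (Rmin_l e 1); pose proof (Rmin_r e 1). split; [apply Rmin_glb; lra|lra]. }
  assert (rlip : forall x y, r x <= r y + d x y).
  { intros x y. apply Rnot_lt_le. intros L.
    pose proof (sup01_ge0 (Sx y)) as Hy0. fold (r y) in Hy0.
    destruct (sup01_approx (Sx x) ((r x - (r y + d x y)) / 2)) as [t [[U [FU HU]] [Ht01 Htg]]].
    { lra. } { apply rpos. }
    fold (r x) in Htg.
    assert (t - d x y <= r y).
    { apply sup01_ub. exists U. split; auto. intros z Hz. apply HU. pose proof (dtri x y z). lra.
      pose proof (dpos x y). split; lra. }
    lra. }
  assert (rcont : continuous op (fun x => / r x)).
  { apply cont_local; auto. intros x eps He.
    exists (fun y => d x y < Rmin (r x / 2) (eps * r x * r x / 2)). split; [apply ball_open|split].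
    - rewrite dxx. apply Rmin_glb_lt; pose proof (rpos x); [lra|]. apply Rdiv_lt_0_compat; [|lra].
      apply Rmult_lt_0_compat; [apply Rmult_lt_0_compat|]; lra.
    - intros y Hy. apply inv_close; auto.
      pose proof (rlip x y). pose proof (rlip y x). rewrite dsym in H0.
      eapply Rle_lt_trans; [|apply Hy]. unfold Rabs; destruct Rcase_abs; lra. }
  destruct (Q_bounded op Ht HQ _ rcont) as [M HM].
  set (delta := / (Rabs M + 1)).
  assert (Hdel : 0 < delta) by (unfold delta; apply Rinv_0_lt_compat; pose proof (Rabs_pos M); lra).
  assert (rbig : forall x, delta < r x).
  { intros x. pose proof (HM x). pose proof (rpos x).
    rewrite Rabs_right in H by (apply Rle_ge, Rlt_le, Rinv_0_lt_compat; auto).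
    unfold delta. pose proof (Rle_abs M).
    apply Rlt_le_trans with (/ / r x).
    - apply Rinv_lt_contravar. { apply Rmult_lt_0_compat; [apply Rinv_0_lt_compat; auto|pose proof (Rabs_pos M); lra]. }
      lra.
    - rewrite Rinv_inv. lra. }
  assert (HUof : forall x, exists U, F U /\ forall y, d x y < delta -> U y).
  { intros x. destruct (sup01_approx (Sx x) (r x - delta)) as [t [[U [FU HU]] [Ht01 Htg]]].
    { pose proof (rbig x); lra. } { apply rpos. }
    exists U. split; auto. intros y Hy. apply HU. fold (r x) in Htg. lra. }
  assert (Hne : exists x0 : X, True).
  { apply NNPP. intros NE. apply NC. exists nil. split; [intros U []|].
    intros x. exfalso. apply NE. exists x; auto. }
  destruct Hne as [x0 _].
  set (Uof := fun x => epsilon (inhabits (fun _ : X => True)) (fun U => F U /\ forall y, d x y < delta -> U y)).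
  assert (HUof' : forall x, F (Uof x) /\ forall y, d x y < delta -> Uof x y).
  { intros x. exact (epsilon_spec _ _ (HUof x)). }
  set (pick := fun l => epsilon (inhabits x0) (fun y => forall p, In p l -> ~ Uof p y)).
  assert (Hpick : forall l, forall p, In p l -> ~ Uof p (pick l)).
  { intros l. apply (epsilon_spec (inhabits x0) (fun y => forall p, In p l -> ~ Uof p y)).
    apply NNPP. intros NE. apply NC. exists (map Uof l). split.
    - intros U HU. apply in_map_iff in HU. destruct HU as [p [<- _]]. apply HUof'.
    - intros y. apply NNPP. intros NY. apply NE. exists y. intros p Hp Up. apply NY.
      exists (Uof p). split; auto. apply in_map; auto. }
  set (L := fix L n := match n with O => nil | S k => pick (L k) :: L k end).
  set (pts := fun n => pick (L n)).
  assert (HinL : forall m n, (m < n)%nat -> In (pts m) (L n)).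
  { intros m n H. induction H; simpl; auto. }
  assert (Hsep : forall m n, m <> n -> delta <= d (pts m) (pts n)).
  { intros m n Hmn.
    assert (G : forall m n, (m < n)%nat -> delta <= d (pts m) (pts n)).
    { intros a b Hab. apply Rnot_lt_le. intros Lt. apply (Hpick (L b) (pts a) (HinL a b Hab)).
      apply HUof'. auto. }
    destruct (Nat.lt_gt_cases m n) as [[H|H] _]; auto. rewrite dsym. apply G; auto. }
  set (phi := fun n y => Rmax 0 (1 - d (pts n) y * (4 / delta))).
  apply (fam_notQ op Ht phi pts); auto.
  - intros n. unfold phi. apply cont_max; auto. apply cont_const; auto.
    apply cont_minus; auto. apply cont_const; auto.
    apply (cont_ext op (fun y => (4 / delta) * d (pts n) y)); [|intros; ring].
    apply cont_scal; auto. apply cont_dist.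
  - intros y. exists (fun z => d y z < delta / 4).
    assert (Hz : forall m z, d y z < delta / 4 -> delta / 2 <= d (pts m) y -> phi m z = 0).
    { intros m z Hz Hm. unfold phi. pose proof (dtri (pts m) z y). rewrite (dsym z y) in H.
      assert (delta / 4 <= d (pts m) z) by lra.
      assert (d (pts m) z * (4 / delta) >= 1).
      { apply Rle_ge. apply Rmult_le_reg_r with (delta / 4); [lra|].
        replace (d (pts m) z * (4 / delta) * (delta / 4)) with (d (pts m) z) by (field; lra). lra. }
      unfold Rmax; destruct Rle_dec; lra. }
    destruct (classic (exists n, d (pts n) y < delta / 2)) as [[n Hn]|NE].
    + exists (S n). split; [apply ball_open|split]. { rewrite dxx; lra. }
      intros m z Hm Hzz. apply Hz; auto. pose proof (Hsep m n ltac:(lia)).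
      pose proof (dtri (pts m) y (pts n)). rewrite (dsym y (pts n)) in H0. lra.
    + exists 0%nat. split; [apply ball_open|split]. { rewrite dxx; lra. }
      intros m z _ Hzz. apply Hz; auto. apply Rnot_lt_le. intros Lt. apply NE. exists m; auto.
  - intros n. unfold phi. rewrite dxx. unfold Rmax; destruct Rle_dec; lra.
  - intros n m Hnm. unfold phi. pose proof (Hsep m n ltac:(lia)).
    assert (d (pts m) (pts n) * (4 / delta) >= 1).
    { apply Rle_ge. apply Rmult_le_reg_r with (delta / 4); [lra|].
      replace (d (pts m) (pts n) * (4 / delta) * (delta / 4)) with (d (pts m) (pts n)) by (field; lra). lra. }
    unfold Rmax; destruct Rle_dec; lra.
Qed.

End Metric.


Lemma small_inv r : 0 < r -> exists k, / (INR k + 1) < r.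
Proof.
  intros Hr. destruct (archimed (/ r)) as [Hup _].
  assert (0 < / r) by (apply Rinv_0_lt_compat; auto).
  exists (Z.to_nat (up (/ r))).
  rewrite INR_IZR_INZ, Z2Nat.id. 2:{ apply le_IZR. simpl. lra. }
  assert (Hrr : / r * r = 1) by (field; lra).
  apply Rmult_lt_reg_l with (IZR (up (/ r)) + 1); [lra|].
  rewrite Rinv_r by lra. nra.
Qed.

Lemma open_near {X : Type} (op : (X -> Prop) -> Prop) (g : X -> R) c e :
  continuous op g -> op (fun y => Rabs (g y - c) < e).
Proof.
  intros Hg. apply (Hg (fun r => Rabs (r - c) < e)). intros r Hr.
  exists (e - Rabs (r - c)). split; [lra|]. intros y Hy.
  pose proof (Rabs_triang (y - r) (r - c)). replace (y - r + (r - c)) with (y - c) in H by ring. lra.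
Qed.

Definition dense_seq {X : Type} {op : (X -> Prop) -> Prop} (D : nat -> CX op) : Prop :=
  forall (h : CX op) eps, 0 < eps -> exists n, forall x, Rabs (proj1_sig h x - proj1_sig (D n) x) < eps.

Definition zeroC {X : Type} (op : (X -> Prop) -> Prop) (Ht : is_topology op) : CX op :=
  exist _ (fun _ => 0) (cont_const op Ht 0).

Lemma Q_dense {X : Type} (op : (X -> Prop) -> Prop) (Ht : is_topology op) :
  Qprop op -> exists D : nat -> CX op, dense_seq D.
Proof.
  intros HQ. set (z0 := zeroC op Ht).
  set (P := fun k (g : nat -> CX op) => forall h : CX op, exists n, forall x,
        Rabs (proj1_sig h x - proj1_sig (g n) x) < / (INR k + 1)).
  assert (HP : forall k, exists g, P k g).
  { intros k. destruct (HQ (/ (INR k + 1))) as [A [HA Hh]].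
    { apply Rinv_0_lt_compat. pose proof (pos_INR k); lra. }
    destruct (Hh z0) as [a0 [Aa0 _]].
    destruct (countable_enum A a0 Aa0 HA) as [g [Hg1 Hg2]].
    exists g. intros h. destruct (Hh h) as [a [Aa Ha]]. destruct (Hg2 a Aa) as [n <-].
    exists n; auto. }
  set (G := fun k => epsilon (inhabits (fun _ : nat => z0)) (P k)).
  exists (fun m => G (fst (of_nat m)) (snd (of_nat m))).
  intros h eps He. destruct (small_inv eps He) as [k Hk].
  destruct (epsilon_spec (inhabits (fun _ : nat => z0)) (P k) (HP k) h) as [n Hn].
  destruct (pair_surj k n) as [m Hm]. exists m. rewrite Hm. simpl.
  intros x. specialize (Hn x). fold (G k) in Hn. lra.
Qed.

Section DenseMetric.
Context {X : Type} (op : (X -> Prop) -> Prop) (HX : tychonoff op) (D : nat -> CX op) (HD : dense_seq D).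

Definition dterm n x y := Rmin (/ 2 ^ n) (Rabs (proj1_sig (D n) x - proj1_sig (D n) y)).
Definition drho x y := sup01 (fun t => exists n, t = dterm n x y).

Lemma inv2pow_pos n : 0 < / 2 ^ n.
Proof. apply Rinv_0_lt_compat. apply pow_lt. lra. Qed.

Lemma inv2pow_le1 n : / 2 ^ n <= 1.
Proof.
  pose proof (pow2_ge n). pose proof (pos_INR n). rewrite <- Rinv_1.
  apply Rinv_le_contravar; lra.
Qed.

Lemma dterm_01 n x y : 0 <= dterm n x y <= 1.
Proof.
  unfold dterm. pose proof (inv2pow_pos n). pose proof (inv2pow_le1 n).
  pose proof (Rabs_pos (proj1_sig (D n) x - proj1_sig (D n) y)).
  pose proof (Rmin_l (/ 2 ^ n) (Rabs (proj1_sig (D n) x - proj1_sig (D n) y))).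
  split; [apply Rmin_glb; lra|lra].
Qed.

Lemma drho_ub n x y : dterm n x y <= drho x y.
Proof. apply sup01_ub; [exists n; auto|apply dterm_01]. Qed.

Lemma drho_le x y B : 0 <= B -> (forall n, dterm n x y <= B) -> drho x y <= B.
Proof. intros HB H. apply sup01_le; auto. intros t [n ->] _. auto. Qed.

Lemma dterm_sym n x y : dterm n x y = dterm n y x.
Proof. unfold dterm. rewrite Rabs_minus_sym. auto. Qed.

Lemma dterm_tri n x y z : dterm n x z <= dterm n x y + dterm n y z.
Proof.
  unfold dterm. pose proof (inv2pow_pos n). set (a := / 2 ^ n).
  set (p := proj1_sig (D n) x). set (q := proj1_sig (D n) y). set (s := proj1_sig (D n) z).
  pose proof (Rabs_triang (p - q) (q - s)). replace (p - q + (q - s)) with (p - s) in H0 by ring.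
  pose proof (Rabs_pos (p - q)). pose proof (Rabs_pos (q - s)).
  unfold Rmin. assert (0 < a) by (unfold a; exact H). repeat destruct Rle_dec; lra.
Qed.

Lemma separ (x : X) (U : X -> Prop) : op U -> U x ->
  exists n, forall y, dterm n x y < Rmin (/ 2 ^ n) (1/3) -> U y.
Proof.
  intros oU Ux. destruct HX as [Ht [HT1 HCR]].
  assert (Hc : closed op (fun z => ~ U z)).
  { unfold closed. replace (fun x0 => ~ ~ U x0) with U; auto. apply pred_ext. intros z; split; auto. apply NNPP. }
  destruct (HCR _ x Hc ltac:(auto)) as [f [Hf [Hf0 Hf1]]].
  destruct (HD (exist _ f Hf) (1/3)) as [n Hn]; [lra|]. simpl in Hn.
  exists n. intros y Hy. apply NNPP. intros NU. specialize (Hf1 y NU).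
  pose proof (Hn x) as Hx. pose proof (Hn y) as Hy'. rewrite Hf0 in Hx. rewrite Hf1 in Hy'.
  assert (Rabs (proj1_sig (D n) x - proj1_sig (D n) y) >= 1/3).
  { unfold Rabs in *; repeat destruct Rcase_abs; lra. }
  unfold dterm in Hy. unfold Rmin at 1 in Hy. unfold Rmin in Hy.
  repeat destruct Rle_dec; lra.
Qed.

Lemma dense_metrizable : metrizable op.
Proof.
  destruct HX as [Ht [HT1 HCR]].
  exists drho. split; [|split; [|split; [|split]]].
  - intros x y. apply sup01_ge0.
  - intros x y. split.
    + intros H0. apply NNPP. intros Nxy.
      destruct (separ x (fun z => ~ z = y) (HT1 y) Nxy) as [n Hn].
      assert (~ dterm n x y < Rmin (/ 2 ^ n) (1/3)) by (intros L; apply (Hn y L); auto).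
      pose proof (drho_ub n x y). pose proof (inv2pow_pos n).
      assert (0 < Rmin (/ 2 ^ n) (1/3)) by (apply Rmin_glb_lt; lra). lra.
    + intros ->. apply Rle_antisym; [|apply sup01_ge0]. apply drho_le; [lra|].
      intros n. unfold dterm. unfold Rminus. rewrite Rplus_opp_r, Rabs_R0. apply Rmin_r.
  - intros x y. apply Rle_antisym; apply drho_le; try apply sup01_ge0; intros n;
      rewrite dterm_sym; apply drho_ub.
  - intros x y z. apply drho_le. { pose proof (sup01_ge0 (fun t => exists n, t = dterm n x y)).
      pose proof (sup01_ge0 (fun t => exists n, t = dterm n y z)). unfold drho; lra. }
    intros n. pose proof (dterm_tri n x y z). pose proof (drho_ub n x y). pose proof (drho_ub n y z). lra.
  - intros U. split.
    + intros oU x Ux. destruct (separ x U oU Ux) as [n Hn].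
      exists (Rmin (/ 2 ^ n) (1/3)). split. { pose proof (inv2pow_pos n). apply Rmin_glb_lt; lra. }
      intros y Hy. apply Hn. pose proof (drho_ub n x y). lra.
    + intros H. apply open_local; auto. intros x Ux.
      destruct (H x Ux) as [r [Hr Hball]].
      destruct (small_pow2 r Hr) as [N HN].
      set (W := fix W k := match k with O => fun _ : X => True
                 | S k' => fun y => W k' y /\ Rabs (proj1_sig (D k') y - proj1_sig (D k') x) < r / 2 end).
      assert (oW : forall k, op (W k)).
      { induction k; simpl. apply open_full; auto. apply open_inter; auto.
        apply open_near. apply (proj2_sig (D k)). }
      assert (HW : forall k y, W k y -> forall n, (n < k)%nat -> Rabs (proj1_sig (D n) y - proj1_sig (D n) x) < r / 2).
      { induction k; simpl; intros y Hy n Hn; [lia|].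
        destruct Hy as [Hy1 Hy2]. destruct (Nat.eq_dec n k) as [->|Hne]; auto. apply (IHk y Hy1); lia. }
      assert (HWk : forall k, W k x).
      { induction k; simpl; auto. split; auto. unfold Rminus; rewrite Rplus_opp_r, Rabs_R0; lra. }
      exists (W N). split; [|split]; auto. intros y Wy. apply Hball.
      apply Rle_lt_trans with (Rmax (r / 2) (/ 2 ^ N)); [|apply Rmax_lub_lt; lra].
      apply drho_le. { pose proof (Rmax_l (r/2) (/ 2 ^ N)). lra. }
      intros n. unfold dterm. destruct (Nat.lt_ge_cases n N) as [L|L].
      * rewrite Rabs_minus_sym. pose proof (HW N y Wy n L).
        pose proof (Rmin_r (/ 2 ^ n) (Rabs (proj1_sig (D n) y - proj1_sig (D n) x))).
        pose proof (Rmax_l (r / 2) (/ 2 ^ N)). lra.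
      * pose proof (Rmin_l (/ 2 ^ n) (Rabs (proj1_sig (D n) x - proj1_sig (D n) y))).
        assert (/ 2 ^ n <= / 2 ^ N).
        { apply Rinv_le_contravar. apply pow_lt; lra. apply Rle_pow; [lra|lia]. }
        pose proof (Rmax_r (r / 2) (/ 2 ^ N)). lra.
Qed.

End DenseMetric.

Lemma Q_P {X : Type} (op : (X -> Prop) -> Prop) (HX : tychonoff op) :
  Qprop op -> compact_space op /\ metrizable op.
Proof.
  intros HQ. pose proof HX as [Ht _].
  destruct (Q_dense op Ht HQ) as [D HD].
  pose proof (dense_metrizable op HX D HD) as HM. split; auto.
  destruct HM as [d [d1 [d2 [d3 [d4 d5]]]]].
  apply (metric_compact op Ht d d1 d2 d3 d4 d5 HQ).
Qed.


Lemma zorn_sets {T : Type} (P : (T -> Prop) -> Prop) :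
  (forall F : (T -> Prop) -> Prop, (forall A, F A -> P A) ->
     (forall A B, F A -> F B -> Subset A B \/ Subset B A) -> P (fun x => exists A, F A /\ A x)) ->
  exists A, P A /\ forall B, Subset A B -> P B -> Subset B A.
Proof.
  intros H.
  destruct (@classical_sets.Zorn_bigcup T P) as [A [PA HA]].
  - intros F HF Htot.
    replace (classical_sets.bigcup F (fun X => X)) with (fun x => exists A, F A /\ A x).
    + apply H. { intros A FA. apply HF. exact FA. }
      intros A B FA FB. destruct (Htot A B FA FB) as [h|h]; [left|right]; intros x; apply h.
    + apply functional_extensionality. intros x. apply propositional_extensionality.
      split. { intros [A [FA Ax]]. exists A; assumption. }
      intros [A FA Ax]. exists A; split; assumption.
  - exists A. split; [exact PA|]. intros B AB PB x Bx. apply NNPP. intros NAx.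
    apply (HA B); [|exact PB]. split.
    + intros y Ay. apply AB. exact Ay.
    + intros E. apply NAx. apply E. exact Bx.
Qed.


Lemma countable_image {T U : Type} (S : T -> Prop) (g : T -> U) :
  countable S -> countable (fun y => exists a, S a /\ y = g a).
Proof.
  intros [c Hc]. destruct (classic (exists a, S a)) as [[a0 Sa0]|NE].
  - set (ch := fun y => epsilon (inhabits a0) (fun a => S a /\ y = g a)).
    exists (fun y => c (ch y)). intros x y Hx Hy E.
    pose proof (epsilon_spec (inhabits a0) (fun a => S a /\ x = g a) Hx) as [S1 E1].
    pose proof (epsilon_spec (inhabits a0) (fun a => S a /\ y = g a) Hy) as [S2 E2].
    fold (ch x) in S1, E1. fold (ch y) in S2, E2.
    rewrite E1, E2. f_equal. apply Hc; auto.
  - exists (fun _ => 0%nat). intros x y [a [Sa _]]. exfalso; eauto.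
Qed.

Section Hard.
Context {X : Type} (op : (X -> Prop) -> Prop) (HX : tychonoff op).

Definition cball (f : CX op) r : CX op -> Prop :=
  fun g => exists dl, 0 < dl /\ forall x, Rabs (proj1_sig g x - proj1_sig f x) < r - dl.

Lemma cball_open f r : Cu_open op (cball f r).
Proof.
  intros g [dl [Hdl Hg]]. exists (dl / 2). split; [lra|]. intros g' Hg'.
  exists (dl / 2). split; [lra|]. intros x. specialize (Hg x). specialize (Hg' x).
  pose proof (Rabs_triang (proj1_sig g' x - proj1_sig g x) (proj1_sig g x - proj1_sig f x)).
  replace (proj1_sig g' x - proj1_sig g x + (proj1_sig g x - proj1_sig f x)) with
    (proj1_sig g' x - proj1_sig f x) in H by ring. lra.
Qed.

Lemma cball_center f r : 0 < r -> cball f r f.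
Proof. intros Hr. exists (r / 2). split; [lra|]. intros x. unfold Rminus. rewrite Rplus_opp_r, Rabs_R0. lra. Qed.

Lemma cball_lt f r g : cball f r g -> forall x, Rabs (proj1_sig g x - proj1_sig f x) < r.
Proof. intros [dl [Hdl H]] x. specialize (H x). lra. Qed.

Lemma Cu_Cm W : Cu_open op W -> Cm_open op W.
Proof.
  destruct HX as [Ht _]. intros H f Wf. destruct (H f Wf) as [e [He Hg]].
  exists (fun _ => e). split; [apply cont_const; auto|split; auto].
Qed.

Lemma Cm_Cg W : Cm_open op W -> Cgamma_open op W.
Proof.
  intros H f Wf. destruct (H f Wf) as [e [He [Hp Hg]]].
  exists e. split; [|split; auto]. intros r. apply (He (fun t => r < t)).
  intros t Ht. exists (t - r). split; [lra|]. intros y Hy. unfold Rabs in Hy; destruct Rcase_abs in Hy; lra.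
Qed.

Lemma Cu_Cg W : Cu_open op W -> Cgamma_open op W.
Proof. intros; apply Cm_Cg, Cu_Cm; auto. Qed.

Lemma ccc_coarser (op1 op2 : (CX op -> Prop) -> Prop) :
  (forall W, op1 W -> op2 W) -> ccc op2 -> ccc op1.
Proof. intros H C F HF HD. apply C; auto. intros U FU. destruct (HF U FU); auto. Qed.

Lemma sep_coarser (op1 op2 : (CX op -> Prop) -> Prop) :
  (forall W, op1 W -> op2 W) -> separable op2 -> separable op1.
Proof. intros H [D [HD1 HD2]]. exists D. split; auto. Qed.

Lemma a0_coarser (op1 op2 : (CX op -> Prop) -> Prop) :
  (forall W, op1 W -> op2 W) -> aleph0_bounded_C op op2 -> aleph0_bounded_C op op1.
Proof. intros H A U [V [oV [VU HV]]]. apply A. exists V. split; auto. Qed.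

Lemma sep_Q : separable (Cu_open op) -> Qprop op.
Proof.
  intros [D [HD Hd]] eps He. exists D. split; auto. intros h.
  destruct (Hd (cball h eps) (cball_open h eps)) as [a [Ba Da]]. { exists h. apply cball_center; auto. }
  exists a. split; auto. intros x. rewrite Rabs_minus_sym. apply (cball_lt h eps a Ba).
Qed.

Lemma a0_Q : aleph0_bounded_C op (Cu_open op) -> Qprop op.
Proof.
  destruct HX as [Ht _].
  intros H eps He. destruct (H (cball (zeroC op Ht) eps)) as [A [HA Hh]].
  { exists (cball (zeroC op Ht) eps). split; [apply cball_open|split; [intros g; auto|]].
    intros z Hz. exists (eps / 2). split; [lra|]. intros x. simpl. rewrite Hz.
    unfold Rminus; rewrite Rplus_opp_r, Rabs_R0. lra. }
  exists A. split; auto. intros h. destruct (Hh h) as [a [u [Aa [Bu E]]]].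
  exists a. split; auto. intros x. rewrite E.
  pose proof (cball_lt _ _ _ Bu x). simpl in H0.
  replace (proj1_sig a x + proj1_sig u x - proj1_sig a x) with (proj1_sig u x - 0) by ring. auto.
Qed.

Lemma lind_Q : lindelof (Cm_open op) -> Qprop op.
Proof.
  intros HL eps He.
  destruct (HL (fun W => exists h, W = cball h eps)) as [G [HG [GF Gc]]].
  - intros U [h ->]. apply Cu_Cm, cball_open.
  - intros h. exists (cball h eps). split; [exists h; auto|apply cball_center; auto].
  - destruct HX as [Ht _].
    set (cen := fun W => epsilon (inhabits (zeroC op Ht)) (fun h => W = cball h eps)).
    exists (fun y => exists W, G W /\ y = cen W). split.
    + apply countable_image; auto.
    + intros h. destruct (Gc h) as [W [GW Wh]]. exists (cen W). split; [exists W; auto|].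
      destruct (GF W GW) as [h0 E].
      pose proof (epsilon_spec (inhabits (zeroC op Ht)) (fun h => W = cball h eps) (ex_intro _ h0 E)) as E2.
      fold (cen W) in E2. rewrite E2 in Wh. apply cball_lt; auto.
Qed.

Lemma network_sep (opC : (CX op -> Prop) -> Prop) : countable_network opC -> separable opC.
Proof.
  destruct HX as [Ht _].
  intros [N [HN HNet]].
  set (pick := fun V : CX op -> Prop => epsilon (inhabits (zeroC op Ht)) V).
  exists (fun y => exists V, N V /\ y = pick V). split.
  - apply countable_image; auto.
  - intros U oU [x Ux]. destruct (HNet U x oU Ux) as [V [NV [Vx VU]]].
    exists (pick V). split.
    + apply VU. apply (epsilon_spec (inhabits (zeroC op Ht)) V). exists x; auto.
    + exists V; auto.
Qed.

Lemma sc_network (opC : (CX op -> Prop) -> Prop) : second_countable opC -> countable_network opC.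
Proof. intros [B [HB [_ H]]]. exists B. split; auto. Qed.

Lemma ccc_Q : ccc (Cu_open op) -> Qprop op.
Proof.
  intros Hccc eps He. apply NNPP. intros NQ.
  set (Sep := fun M : CX op -> Prop => forall f g, M f -> M g -> f <> g ->
                 exists x, eps <= Rabs (proj1_sig f x - proj1_sig g x)).
  destruct (zorn_sets Sep) as [M [SM HM]].
  { intros F HF Htot f g [A [FA Af]] [B [FB Bg]] Hfg.
    destruct (Htot A B FA FB) as [AB|BA].
    - apply (HF B FB); auto.
    - apply (HF A FA); auto. }
  assert (Mc : countable M).
  { destruct (Hccc (fun W => exists f, M f /\ W = cball f (eps / 2))) as [c Hc].
    - intros U [f [Mf ->]]. split; [apply cball_open|exists f; apply cball_center; lra].
    - intros U V [f [Mf ->]] [g [Mg ->]] UV h [Bf Bg].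
      assert (f <> g) by (intros ->; auto).
      destruct (SM f g Mf Mg H) as [x Hx].
      pose proof (cball_lt _ _ _ Bf x). pose proof (cball_lt _ _ _ Bg x).
      pose proof (Rabs_triang (proj1_sig f x - proj1_sig h x) (proj1_sig h x - proj1_sig g x)).
      rewrite Rabs_minus_sym in H0.
      replace (proj1_sig f x - proj1_sig h x + (proj1_sig h x - proj1_sig g x)) with
        (proj1_sig f x - proj1_sig g x) in H2 by ring. lra.
    - exists (fun f => c (cball f (eps / 2))). intros f g Mf Mg E.
      apply Hc in E; [|exists f; auto|exists g; auto].
      apply NNPP. intros Hfg. destruct (SM f g Mf Mg Hfg) as [x Hx].
      assert (Bf : cball g (eps/2) f) by (rewrite <- E; apply cball_center; lra).
      pose proof (cball_lt _ _ _ Bf x). lra. }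
  apply NQ. exists M. split; auto. intros h. apply NNPP. intros Nh.
  assert (Far : forall a, M a -> exists x, eps <= Rabs (proj1_sig h x - proj1_sig a x)).
  { intros a Ma. apply NNPP. intros NF. apply Nh. exists a. split; auto. intros x.
    apply Rnot_le_lt. intros L. apply NF. exists x; auto. }
  assert (Mh : M h).
  { apply (HM (fun g => M g \/ g = h)); [intros g; auto| |right; auto].
    intros f g [Mf| ->] [Mg| ->] Hfg.
    - apply SM; auto.
    - destruct (Far f Mf) as [x Hx]. exists x. rewrite Rabs_minus_sym; auto.
    - apply Far; auto.
    - exfalso; auto. }
  destruct (Far h Mh) as [x Hx]. unfold Rminus in Hx. rewrite Rplus_opp_r, Rabs_R0 in Hx. lra.
Qed.

End Hard.


Lemma list_choice {A B : Type} (P : A -> B -> Prop) (l : list B) :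
  (forall b, In b l -> exists a, P a b) -> exists la, (forall b, In b l -> exists a, In a la /\ P a b) /\
    (forall a, In a la -> exists b, In b l /\ P a b).
Proof.
  induction l as [|b l IH]; intros H.
  - exists nil. split; [intros b []|intros a []].
  - destruct (H b (or_introl eq_refl)) as [a Ha].
    destruct IH as [la [Hla Hla2]]. { intros b' Hb'. apply H. right; auto. }
    exists (a :: la). split.
    + intros b' [<-|Hb'].
      * exists a. split; [left|]; auto.
      * destruct (Hla b' Hb') as [a' [Ia' Pa']]. exists a'. split; [right|]; auto.
    + intros a' [<-|Ia'].
      * exists b. split; [left|]; auto.
      * destruct (Hla2 a' Ia') as [b' [Ib' Pb']]. exists b'. split; [right|]; auto.
Qed.

Lemma list_nat_bound (l : list nat) : exists N, forall n, In n l -> (n <= N)%nat.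
Proof.
  induction l as [|a l [N HN]].
  - exists 0%nat. intros n [].
  - exists (max a N). intros n [<-|Hn]; [lia|]. specialize (HN n Hn). lia.
Qed.

Lemma list_min_pos {A : Type} (g : A -> R) (l : list A) : (forall a, In a l -> 0 < g a) ->
  exists m, 0 < m /\ forall a, In a l -> m <= g a.
Proof.
  induction l as [|a l IH]; intros H.
  - exists 1. split; [lra|]. intros a [].
  - destruct IH as [m [Hm Hm']]. { intros; apply H; right; auto. }
    exists (Rmin m (g a)). split. { apply Rmin_glb_lt; auto. apply H; left; auto. }
    intros b [<-|Hb]. apply Rmin_r. pose proof (Rmin_l m (g a)). pose proof (Hm' b Hb). lra.
Qed.

Lemma nat_above y : exists L : nat, y < INR L.
Proof.
  destruct (archimed (Rabs y)) as [Hup _]. exists (Z.to_nat (up (Rabs y))).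
  pose proof (Rabs_pos y). pose proof (Rle_abs y).
  rewrite INR_IZR_INZ, Z2Nat.id. lra. apply le_IZR. simpl. lra.
Qed.

Lemma IZR_split k : IZR k = INR (Z.to_nat k) - INR (Z.to_nat (- k)).
Proof.
  destruct (Z_le_gt_dec 0 k).
  - assert (Z.to_nat (- k) = 0%nat) by lia. rewrite H. simpl.
    rewrite INR_IZR_INZ, Z2Nat.id by lia. ring.
  - assert (Z.to_nat k = 0%nat) by lia. rewrite H. simpl.
    rewrite INR_IZR_INZ, Z2Nat.id by lia. rewrite opp_IZR. ring.
Qed.

Definition qr (m : nat) : R :=
  (INR (fst (of_nat m)) - INR (fst (of_nat (snd (of_nat m))))) / (INR (snd (of_nat (snd (of_nat m)))) + 1).

Lemma qr_dense y eps : 0 < eps -> exists m, Rabs (qr m - y) < eps.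
Proof.
  intros He. destruct (small_inv eps He) as [c Hc].
  set (z := y * (INR c + 1)). destruct (archimed z) as [H1 H2].
  set (k := up z).
  destruct (pair_surj (Z.to_nat (- k)) c) as [m1 Hm1].
  destruct (pair_surj (Z.to_nat k) m1) as [m Hm].
  exists m. unfold qr. rewrite Hm. simpl. rewrite Hm1. simpl.
  rewrite <- IZR_split. fold k.
  assert (Hc1 : 0 < INR c + 1) by (pose proof (pos_INR c); lra).
  replace (IZR k / (INR c + 1) - y) with ((IZR k - z) / (INR c + 1)) by (unfold z; field; lra).
  unfold Rdiv. rewrite Rabs_mult, Rabs_inv, (Rabs_right (INR c + 1)) by lra.
  assert (Rabs (IZR k - z) <= 1) by (unfold k; rewrite Rabs_right; lra).
  apply Rle_lt_trans with (1 * / (INR c + 1)); [|lra].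
  apply Rmult_le_compat_r; [|auto]. left; apply Rinv_0_lt_compat; auto.
Qed.

Section CompactMetric.
Context {X : Type} (op : (X -> Prop) -> Prop) (Ht : is_topology op) (Hc : compact_space op) (d : X -> X -> R)
  (dpos : forall x y, 0 <= d x y) (deq : forall x y, d x y = 0 <-> x = y)
  (dsym : forall x y, d x y = d y x) (dtri : forall x y z, d x z <= d x y + d y z)
  (dop : forall U, op U <-> (forall x, U x -> exists eps, 0 < eps /\ forall y, d x y < eps -> U y)).

Lemma nets eta : 0 < eta -> exists l : list X, forall x, exists p, In p l /\ d p x < eta.
Proof.
  intros He. destruct (Hc (fun U => exists p, U = fun y => d p y < eta)) as [lU [HlU Hcov]].
  - intros U [p ->]. apply (ball_open op d dtri dop).
  - intros x. exists (fun y => d x y < eta). split; [exists x; auto|]. rewrite (dxx d deq). auto.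
  - destruct (list_choice (fun p U => U = fun y => d p y < eta) lU) as [lp [Hlp Hlp2]].
    { intros U HU. apply HlU; auto. }
    exists lp. intros x. destruct (Hcov x) as [U [IU Ux]]. destruct (Hlp U IU) as [p [Ip ->]].
    exists p. auto.
Qed.

Lemma cbounded f : continuous op f -> exists M, forall x, Rabs (f x) <= M.
Proof.
  intros Hf. destruct (Hc (fun U => exists n : nat, U = fun x => Rabs (f x - 0) < INR n)) as [lU [HlU Hcov]].
  - intros U [n ->]. apply open_near; auto.
  - intros x. destruct (nat_above (Rabs (f x - 0))) as [n Hn]. exists (fun x => Rabs (f x - 0) < INR n).
    split; [exists n|]; auto.
  - destruct (list_choice (fun (n : nat) U => U = fun x => Rabs (f x - 0) < INR n) lU) as [ln [Hln Hln2]].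
    { intros U HU. apply HlU; auto. }
    destruct (list_nat_bound ln) as [N HN]. exists (INR N). intros x.
    destruct (Hcov x) as [U [IU Ux]]. destruct (Hln U IU) as [n [In' ->]].
    rewrite Rminus_0_r in Ux. pose proof (le_INR _ _ (HN n In')). lra.
Qed.

Lemma unif_cont f : continuous op f -> forall eps, 0 < eps -> exists dl, 0 < dl /\
  forall x y, d x y < dl -> Rabs (f x - f y) < eps.
Proof.
  intros Hf eps He.
  set (P := fun (pd : X * R) (U : X -> Prop) => 0 < snd pd /\
              (forall y, d (fst pd) y < 2 * snd pd -> Rabs (f y - f (fst pd)) < eps / 2) /\
              U = fun y => d (fst pd) y < snd pd).
  destruct (Hc (fun U => exists pd, P pd U)) as [lU [HlU Hcov]].
  - intros U [pd [_ [_ ->]]]. apply (ball_open op d dtri dop).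
  - intros x. destruct (cont_local_inv op f Hf x (eps / 2)) as [W [oW [Wx HW]]]; [lra|].
    destruct (open_ball op d dop W x oW Wx) as [e [He' HWe]].
    exists (fun y => d x y < e / 2). split.
    + exists (x, e / 2). unfold P; simpl. split; [lra|split; auto]. intros y Hy. apply HW, HWe. lra.
    + rewrite (dxx d deq). lra.
  - destruct (list_choice P lU) as [lp [Hlp Hlp2]]. { intros U HU; apply HlU; auto. }
    destruct (list_min_pos snd lp) as [m [Hm Hm']].
    { intros pd Hpd. destruct (Hlp2 pd Hpd) as [U [_ [H _]]]. auto. }
    exists m. split; auto. intros x y Hxy.
    destruct (Hcov x) as [U [IU Ux]]. destruct (Hlp U IU) as [[p dl] [Ipd [Hdl [Hball ->]]]].
    simpl in *. pose proof (Hm' _ Ipd). simpl in H.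
    assert (Hx : Rabs (f x - f p) < eps / 2) by (apply Hball; lra).
    assert (Hy : Rabs (f y - f p) < eps / 2) by (apply Hball; pose proof (dtri p x y); lra).
    pose proof (Rabs_triang (f x - f p) (f p - f y)). rewrite (Rabs_minus_sym (f p) (f y)) in H0.
    replace (f x - f p + (f p - f y)) with (f x - f y) in H0 by ring. lra.
Qed.

Definition Net (n : nat) : list X :=
  epsilon (inhabits nil) (fun l => forall x, exists p, In p l /\ d p x < / (INR n + 1)).

Lemma Net_spec n : forall x, exists p, In p (Net n) /\ d p x < / (INR n + 1).
Proof.
  apply (epsilon_spec (inhabits nil) (fun l => forall x, exists p, In p l /\ d p x < / (INR n + 1))).
  apply nets. apply Rinv_0_lt_compat. pose proof (pos_INR n); lra.
Qed.

Definition term (L : nat) (pm : X * nat) (x : X) : R := qr (snd pm) + INR L * d (fst pm) x.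

Definition ffold (L K : nat) (l : list (X * nat)) (x : X) : R :=
  fold_right (fun pm acc => Rmin (term L pm x) acc) (INR K) l.

Lemma ffold_cont L K l : continuous op (ffold L K l).
Proof.
  induction l as [|pm l IH]; simpl.
  - apply cont_const; auto.
  - unfold ffold; simpl. apply cont_min; auto. unfold term. apply cont_plus; auto.
    apply cont_const; auto. apply cont_scal; auto. eapply cont_dist; eauto.
Qed.

Lemma ffold_le L K l x pm : In pm l -> ffold L K l x <= term L pm x.
Proof.
  induction l as [|a l IH]; simpl; [intros []|]. intros [<-|Hi].
  - unfold ffold; simpl. apply Rmin_l.
  - unfold ffold in *; simpl. pose proof (Rmin_r (term L a x) (fold_right (fun pm0 acc => Rmin (term L pm0 x) acc) (INR K) l)).
    pose proof (IH Hi). lra.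
Qed.

Lemma ffold_ge L K l x B : B <= INR K -> (forall pm, In pm l -> B <= term L pm x) -> B <= ffold L K l x.
Proof.
  intros HK. induction l as [|a l IH]; intros H; unfold ffold in *; simpl; auto.
  apply Rmin_glb. apply H; left; auto. apply IH. intros; apply H; right; auto.
Qed.

Lemma combine_map (l : list X) (m : X -> nat) : combine l (map m l) = map (fun p => (p, m p)) l.
Proof. induction l; simpl; auto. rewrite IHl. auto. Qed.

Definition i1 k := fst (of_nat k).
Definition i2 k := fst (of_nat (snd (of_nat k))).
Definition i3 k := fst (of_nat (snd (of_nat (snd (of_nat k))))).
Definition i4 k := snd (of_nat (snd (of_nat (snd (of_nat k))))).

Lemma idx_surj a b c e : exists k, i1 k = a /\ i2 k = b /\ i3 k = c /\ i4 k = e.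
Proof.
  destruct (pair_surj c e) as [k3 H3]. destruct (pair_surj b k3) as [k2 H2].
  destruct (pair_surj a k2) as [k1 H1]. exists k1. unfold i1, i2, i3, i4.
  rewrite H1; simpl. rewrite H2; simpl. rewrite H3; simpl. auto.
Qed.

Definition DX (k : nat) : CX op :=
  exist _ (ffold (i2 k) (i3 k) (combine (Net (i1 k)) (dec_list (i4 k)))) (ffold_cont _ _ _).

Lemma DX_dense : dense_seq DX.
Proof.
  intros h eps He. set (f := proj1_sig h). pose proof (proj2_sig h) as Hf. fold f in Hf.
  destruct (cbounded f Hf) as [M0 HM0]. set (M := Rabs M0).
  assert (HM : forall x, Rabs (f x) <= M) by (intros x; pose proof (HM0 x); pose proof (Rle_abs M0); unfold M; lra).
  assert (M0' : 0 <= M) by apply Rabs_pos.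
  destruct (unif_cont f Hf (eps/4)) as [dl [Hdl Hu]]; [lra|].
  destruct (nat_above ((2*M+1)/dl)) as [L HL].
  destruct (nat_above M) as [K HK].
  assert (HL1 : 0 < INR L + 1) by (pose proof (pos_INR L); lra).
  set (eta := Rmin dl (eps / (4 * (INR L + 1)))).
  assert (Heta : 0 < eta) by (apply Rmin_glb_lt; auto; apply Rdiv_lt_0_compat; lra).
  destruct (small_inv eta Heta) as [n Hn].
  set (mc := fun p => epsilon (inhabits 0%nat) (fun m => Rabs (qr m - f p) < eps/4)).
  assert (Hmc : forall p, Rabs (qr (mc p) - f p) < eps/4).
  { intros p. apply (epsilon_spec (inhabits 0%nat) (fun m => Rabs (qr m - f p) < eps/4)).
    apply qr_dense. lra. }
  destruct (dec_list_surj (map mc (Net n))) as [c Hcl].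
  destruct (idx_surj n L K c) as [k [E1 [E2 [E3 E4]]]].
  exists k. intros x. unfold DX. simpl proj1_sig. rewrite E1, E2, E3, E4, Hcl, combine_map. fold f.
  set (F := ffold L K (map (fun p => (p, mc p)) (Net n)) x).
  assert (Up : F < f x + 3 * eps / 4).
  { destruct (Net_spec n x) as [p [Ip Hp]].
    assert (Hle : F <= term L (p, mc p) x) by (apply ffold_le; apply in_map_iff; exists p; auto).
    unfold term in Hle; simpl in Hle.
    pose proof (Rmin_l dl (eps / (4 * (INR L + 1)))). pose proof (Rmin_r dl (eps / (4 * (INR L + 1)))).
    assert (Hu' : Rabs (f p - f x) < eps / 4) by (apply Hu; unfold eta in Hn; lra).
    assert (INR L * d p x <= INR L * (eps / (4 * (INR L + 1)))).
    { apply Rmult_le_compat_l; [apply pos_INR|]. unfold eta in Hn. lra. }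
    assert (INR L * (eps / (4 * (INR L + 1))) = eps / 4 - eps / (4 * (INR L + 1))) by (field; lra).
    assert (0 < eps / (4 * (INR L + 1))) by (apply Rdiv_lt_0_compat; lra).
    pose proof (Hmc p).
    unfold Rabs in Hu', H4; destruct Rcase_abs in Hu'; destruct Rcase_abs in H4; lra. }
  assert (Lo : f x - eps / 2 <= F).
  { apply ffold_ge.
    - pose proof (HM x). pose proof (Rle_abs (f x)). lra.
    - intros pm Hpm. apply in_map_iff in Hpm. destruct Hpm as [p [<- Ip]].
      unfold term; simpl. pose proof (Hmc p) as Hq. pose proof (pos_INR L).
      pose proof (dpos p x).
      destruct (Rlt_le_dec (d p x) dl) as [Lt|Ge].
      + pose proof (Hu p x Lt). assert (0 <= INR L * d p x) by (apply Rmult_le_pos; auto).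
        unfold Rabs in H1, Hq; destruct Rcase_abs in H1; destruct Rcase_abs in Hq; lra.
      + assert (INR L * dl > 2 * M + 1).
        { apply Rmult_lt_reg_r with (/ dl). apply Rinv_0_lt_compat; auto.
          rewrite Rmult_assoc, Rinv_r by lra. unfold Rdiv in HL. lra. }
        assert (INR L * dl <= INR L * d p x) by (apply Rmult_le_compat_l; auto).
        pose proof (HM p) as HMp. pose proof (HM x). pose proof (Rle_abs (f x)).
        assert (- M <= f p) by (unfold Rabs in HMp; destruct Rcase_abs in HMp; lra).
        unfold Rabs in Hq; destruct Rcase_abs in Hq; lra. }
  unfold Rabs; destruct Rcase_abs; lra.
Qed.

End CompactMetric.


Lemma sc_lindelof {T : Type} (opC : (T -> Prop) -> Prop) : second_countable opC -> lindelof opC.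
Proof.
  intros [B [[c Hc] [HB Hbase]]] F HF Hcov.
  set (Sb := fun V => B V /\ exists U, F U /\ Subset V U).
  set (ch := fun V => epsilon (inhabits (fun _ : T => True)) (fun U => F U /\ Subset V U)).
  exists (fun W => exists V, Sb V /\ W = ch V). split; [|split].
  - apply countable_image. exists c. intros a b [Ba _] [Bb _]. apply Hc; auto.
  - intros W [V [[BV HV] ->]]. apply (epsilon_spec (inhabits (fun _ : T => True)) (fun U => F U /\ Subset V U) HV).
  - intros x. destruct (Hcov x) as [U [FU Ux]]. destruct (Hbase U x (HF U FU) Ux) as [V [BV [Vx VU]]].
    assert (HV : exists U, F U /\ Subset V U) by (exists U; auto).
    exists (ch V). split. { exists V. split; [split|]; auto. }
    apply (epsilon_spec (inhabits (fun _ : T => True)) (fun U => F U /\ Subset V U) HV). auto.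
Qed.

Section Dense.
Context {X : Type} (op : (X -> Prop) -> Prop) (HX : tychonoff op) (D : nat -> CX op) (HD : dense_seq D).

Lemma dense_hits U : Cu_open op U -> (exists g, U g) -> exists n, U (D n).
Proof.
  intros oU [g Ug]. destruct (oU g Ug) as [e [He HU]]. destruct (HD g e He) as [n Hn].
  exists n. apply HU. intros x. rewrite Rabs_minus_sym. auto.
Qed.

Lemma dense_sep : separable (Cu_open op).
Proof.
  exists (fun g => exists n, g = D n). split.
  - apply (countable_range _ D). intros a [n ->]. exists n; auto.
  - intros U oU Hne. destruct (dense_hits U oU Hne) as [n Hn]. exists (D n). split; auto. exists n; auto.
Qed.

Lemma dense_sc : second_countable (Cu_open op).
Proof.
  set (bb := fun k => cball op (D (fst (of_nat k))) (/ (INR (snd (of_nat k)) + 1))).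
  exists (fun V => exists k, V = bb k). split; [|split].
  - apply (countable_range _ bb). intros a [k ->]. exists k; auto.
  - intros V [k ->]. apply cball_open.
  - intros U g oU Ug. destruct (oU g Ug) as [e [He HU]].
    destruct (small_inv (e / 2)) as [j Hj]; [lra|].
    assert (Hj0 : 0 < / (INR j + 1)) by (apply Rinv_0_lt_compat; pose proof (pos_INR j); lra).
    destruct (HD g (/ (INR j + 1) / 2)) as [n Hn]; [lra|].
    destruct (pair_surj n j) as [k Hk].
    exists (bb k). unfold bb. rewrite Hk. simpl. split; [exists k; unfold bb; rewrite Hk; auto|split].
    + exists (/ (INR j + 1) / 2). split; [lra|]. intros x. specialize (Hn x). lra.
    + intros g' Hg'. apply HU. intros x. pose proof (cball_lt op _ _ _ Hg' x). specialize (Hn x).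
      pose proof (Rabs_triang (proj1_sig g' x - proj1_sig (D n) x) (proj1_sig (D n) x - proj1_sig g x)).
      rewrite (Rabs_minus_sym (proj1_sig (D n) x)) in H0.
      replace (proj1_sig g' x - proj1_sig (D n) x + (proj1_sig (D n) x - proj1_sig g x)) with
        (proj1_sig g' x - proj1_sig g x) in H0 by ring. lra.
Qed.

Lemma dense_ccc : ccc (Cu_open op).
Proof.
  intros F HF Hdis.
  set (c := fun U : CX op -> Prop => epsilon (inhabits 0%nat) (fun n => U (D n))).
  assert (Hc : forall U, F U -> U (D (c U))).
  { intros U FU. apply (epsilon_spec (inhabits 0%nat) (fun n => U (D n))).
    destruct (HF U FU). apply dense_hits; auto. }
  exists c. intros U V FU FV E. apply NNPP. intros NE.
  apply (Hdis U V FU FV NE (D (c U))). split; [apply Hc; auto|rewrite E; apply Hc; auto].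
Qed.

Lemma dense_a0 : aleph0_bounded_C op (Cu_open op).
Proof.
  destruct HX as [Ht _].
  intros U [V [oV [VU Hz]]].
  exists (fun g => exists n, g = D n). split.
  - apply (countable_range _ D). intros a [n ->]. exists n; auto.
  - intros h. destruct (oV (zeroC op Ht) (Hz (zeroC op Ht) (fun x => eq_refl))) as [e [He HV]].
    destruct (HD h e He) as [n Hn].
    set (u := exist (fun f => continuous op f) (fun x => proj1_sig h x - proj1_sig (D n) x)
                (cont_minus op Ht _ _ (proj2_sig h) (proj2_sig (D n))) : CX op).
    exists (D n), u. split; [exists n; auto|split].
    + apply VU, HV. intros x. simpl. rewrite Rminus_0_r. auto.
    + intros x. simpl. ring.
Qed.

End Dense.

Lemma compact_Cg_Cu {X : Type} (op : (X -> Prop) -> Prop) (Ht : is_topology op) :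
  compact_space op -> forall W, Cgamma_open op W -> Cu_open op W.
Proof.
  intros Hc W HW f Wf. destruct (HW f Wf) as [eta [Hl [Hp Hg]]].
  destruct (Hc (fun U => exists n : nat, U = fun x => / (INR n + 1) < eta x)) as [lU [HlU Hcov]].
  - intros U [n ->]. apply Hl.
  - intros x. destruct (small_inv (eta x) (Hp x)) as [n Hn]. exists (fun x => / (INR n + 1) < eta x).
    split; [exists n|]; auto.
  - destruct (list_choice (fun (n : nat) U => U = fun x => / (INR n + 1) < eta x) lU) as [ln [Hln _]].
    { intros U HU. apply HlU; auto. }
    destruct (list_nat_bound ln) as [N HN].
    exists (/ (INR N + 1)). split. { apply Rinv_0_lt_compat. pose proof (pos_INR N); lra. }
    intros g Hg'. apply Hg. intros x. specialize (Hg' x).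
    destruct (Hcov x) as [U [IU Ux]]. destruct (Hln U IU) as [n [In' ->]].
    pose proof (le_INR _ _ (HN n In')). pose proof (pos_INR n).
    assert (/ (INR N + 1) <= / (INR n + 1)) by (apply Rinv_le_contravar; lra). lra.
Qed.

Theorem theorem2p4 (X : Type) (op : (X -> Prop) -> Prop) (HX : tychonoff op) :
  (aleph0_bounded_C op (Cgamma_open op) <-> compact_space op /\ metrizable op) /\
  (aleph0_bounded_C op (Cm_open op) <-> compact_space op /\ metrizable op) /\
  (aleph0_bounded_C op (Cu_open op) <-> compact_space op /\ metrizable op) /\
  (separable (Cu_open op) <-> compact_space op /\ metrizable op) /\
  (second_countable (Cgamma_open op) <-> compact_space op /\ metrizable op) /\
  (countable_network (Cgamma_open op) <-> compact_space op /\ metrizable op) /\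
  (separable (Cgamma_open op) <-> compact_space op /\ metrizable op) /\
  (ccc (Cgamma_open op) <-> compact_space op /\ metrizable op) /\
  (separable (Cm_open op) <-> compact_space op /\ metrizable op) /\
  (lindelof (Cm_open op) <-> compact_space op /\ metrizable op) /\
  (ccc (Cm_open op) <-> compact_space op /\ metrizable op).
Proof.
  pose proof HX as [Ht _].
  assert (Fwd : compact_space op /\ metrizable op ->
    Cgamma_open op = Cu_open op /\ Cm_open op = Cu_open op /\ exists D : nat -> CX op, dense_seq D).
  { intros [Hc [d [d1 [d2 [d3 [d4 d5]]]]]]. split; [|split].
    - apply functional_extensionality. intros W. apply propositional_extensionality. split.
      + apply compact_Cg_Cu; auto.
      + apply Cu_Cg; auto.
    - apply functional_extensionality. intros W. apply propositional_extensionality. split.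
      + intros H. apply compact_Cg_Cu; auto. apply Cm_Cg; auto.
      + apply Cu_Cm; auto.
    - exists (DX op Ht d d1 d2 d3 d4 d5). exact (DX_dense op Ht Hc d d1 d2 d3 d4 d5). }
  assert (QP := Q_P op HX).
  assert (CgCu := Cu_Cg op HX). assert (CmCu := Cu_Cm op HX).
  assert (I1 : aleph0_bounded_C op (Cgamma_open op) <-> compact_space op /\ metrizable op).
  { split.
    - intros HH. apply QP, a0_Q; auto. apply (a0_coarser op _ _ CgCu HH).
    - intros HH. destruct (Fwd HH) as [E1 [E2 [D HD]]]. rewrite E1. apply dense_a0 with D; auto. }
  assert (I2 : aleph0_bounded_C op (Cm_open op) <-> compact_space op /\ metrizable op).
  { split.
    - intros HH. apply QP, a0_Q; auto. apply (a0_coarser op _ _ CmCu HH).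
    - intros HH. destruct (Fwd HH) as [E1 [E2 [D HD]]]. rewrite E2. apply dense_a0 with D; auto. }
  assert (I3 : aleph0_bounded_C op (Cu_open op) <-> compact_space op /\ metrizable op).
  { split.
    - intros HH. apply QP, a0_Q; auto.
    - intros HH. destruct (Fwd HH) as [E1 [E2 [D HD]]]. apply dense_a0 with D; auto. }
  assert (I4 : separable (Cu_open op) <-> compact_space op /\ metrizable op).
  { split.
    - intros HH. apply QP, sep_Q; auto.
    - intros HH. destruct (Fwd HH) as [E1 [E2 [D HD]]]. apply dense_sep with D; auto. }
  assert (I5 : second_countable (Cgamma_open op) <-> compact_space op /\ metrizable op).
  { split.
    - intros HH. apply QP, sep_Q; auto. apply (sep_coarser op _ _ CgCu). apply network_sep; auto. apply sc_network; auto.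
    - intros HH. destruct (Fwd HH) as [E1 [E2 [D HD]]]. rewrite E1. apply dense_sc with D; auto. }
  assert (I6 : countable_network (Cgamma_open op) <-> compact_space op /\ metrizable op).
  { split.
    - intros HH. apply QP, sep_Q; auto. apply (sep_coarser op _ _ CgCu). apply network_sep; auto.
    - intros HH. destruct (Fwd HH) as [E1 [E2 [D HD]]]. rewrite E1. apply sc_network; auto. apply dense_sc with D; auto. }
  assert (I7 : separable (Cgamma_open op) <-> compact_space op /\ metrizable op).
  { split.
    - intros HH. apply QP, sep_Q; auto. apply (sep_coarser op _ _ CgCu HH).
    - intros HH. destruct (Fwd HH) as [E1 [E2 [D HD]]]. rewrite E1. apply dense_sep with D; auto. }
  assert (I8 : ccc (Cgamma_open op) <-> compact_space op /\ metrizable op).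
  { split.
    - intros HH. apply QP, ccc_Q; auto. apply (ccc_coarser op _ _ CgCu HH).
    - intros HH. destruct (Fwd HH) as [E1 [E2 [D HD]]]. rewrite E1. apply dense_ccc with D; auto. }
  assert (I9 : separable (Cm_open op) <-> compact_space op /\ metrizable op).
  { split.
    - intros HH. apply QP, sep_Q; auto. apply (sep_coarser op _ _ CmCu HH).
    - intros HH. destruct (Fwd HH) as [E1 [E2 [D HD]]]. rewrite E2. apply dense_sep with D; auto. }
  assert (I10 : lindelof (Cm_open op) <-> compact_space op /\ metrizable op).
  { split.
    - intros HH. apply QP, lind_Q; auto.
    - intros HH. destruct (Fwd HH) as [E1 [E2 [D HD]]]. rewrite E2. apply sc_lindelof. apply dense_sc with D; auto. }
  assert (I11 : ccc (Cm_open op) <-> compact_space op /\ metrizable op).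
  { split.
    - intros HH. apply QP, ccc_Q; auto. apply (ccc_coarser op _ _ CmCu HH).
    - intros HH. destruct (Fwd HH) as [E1 [E2 [D HD]]]. rewrite E2. apply dense_ccc with D; auto. }
  exact (conj I1 (conj I2 (conj I3 (conj I4 (conj I5 (conj I6 (conj I7 (conj I8 (conj I9 (conj I10 I11)))))))))).
Qed.
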